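(* Let $X$ be a Tychonoff space. If player II has a winning strategy in the game $\mathsf{G}_1(\mathcal{O}, \mathcal{O})$ played on $X$, then player II has a winning strategy in the game $\mathsf{G}_1(\Omega_{\mathrm{o}}, \Omega_{\mathrm{o}})$ played on $C_p(X)$, and $C_p(X)$ is productively countably tight.
   Context: $\mathcal{O}$ is the collection of all open covers of $X$. For families $\mathcal{A},\mathcal{B}$, the game $\mathsf{G}_1(\mathcal{A},\mathcal{B})$ is played in innings $n \in \omega$: player I chooses $A_n \in \mathcal{A}$, then player II chooses $a_n \in A_n$; II wins iff $\{a_n : n \in \omega\} \in \mathcal{B}$. $C_p(X)$ is the space of continuous real-valued functions on $X$ with the topology of pointwise convergence, $\mathrm{o}$ is the constant zero function, and $\Omega_{\mathrm{o}}$ is the collection of all sets $A \subset C_p(X)$ with $\mathrm{o} \notin A$ and $\mathrm{o} \in \overline{A}$. A space $Z$ is productively countably tight if $Z \times Y$ is countably tight for every countably tight space $Y$ (countably tight: whenever $y \in \overline{A}$ there is a countable $B \subset A$ with $y \in \overline{B}$). *)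

(* Defs.v *)
From HB Require Import structures.
From mathcomp Require Import all_boot all_order all_algebra.
From mathcomp Require Import all_classical all_reals all_analysis.
Unset Printing Implicit Defensive.
Import Order.TTheory GRing.Theory Num.Theory.
Import numFieldNormedType.Exports.
Local Open Scope classical_set_scope.
Local Open Scope ring_scope.

Definition tychonoff_space (X : topologicalType) : Prop :=
  completely_regular_space X /\ accessible_space X.

Definition open_covers (X : topologicalType) : set (set (set X)) :=
  [set U | (forall u, U u -> open u) /\ \bigcup_(u in U) u = setT].

(* The game G_1(A, B): in inning n, I plays As n in A, II answers an element
   of As n; II wins iff the set of II's answers belongs to B.
   A strategy for II maps the finite sequence of I's moves so far
   [:: As 0; ...; As n] to II's answer in inning n. *)
Definition II_has_winning_strategy {T : Type} (A B : set (set T)) : Prop :=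
  exists sigma : seq (set T) -> T,
    forall As : nat -> set T, (forall n, A (As n)) ->
      (forall n, As n (sigma (mkseq As n.+1))) /\
      B (range (fun n => sigma (mkseq As n.+1))).

Definition continuous_fun_set (R : realType) (X : topologicalType)
  : set {ptws X -> R} := [set f | continuous (f : X -> R)].

Definition Cp (R : realType) (X : topologicalType) : topologicalType :=
  set_type (continuous_fun_set R X).

Lemma continuous_fun_set0 (R : realType) (X : topologicalType) :
  (fun _ : X => 0 : R) \in continuous_fun_set R X.
Proof. by apply/mem_set; exact: cst_continuous. Qed.

Definition Cp_zero (R : realType) (X : topologicalType) : Cp R X :=
  exist _ (fun _ : X => 0 : R) (continuous_fun_set0 R X).

Definition Omega_o (R : realType) (X : topologicalType) : set (set (Cp R X)) :=
  [set A | ~ A (Cp_zero R X) /\ closure A (Cp_zero R X)].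

Definition countably_tight (Z : topologicalType) : Prop :=
  forall (A : set Z) (z : Z), closure A z ->
    exists B : set Z, [/\ B `<=` A, countable B & closure B z].

Definition productively_countably_tight (Z : topologicalType) : Prop :=
  forall Y : topologicalType, countably_tight Y ->
    countably_tight (Z * Y)%type.

(* Main.v *)
Require Import Defs.
From HB Require Import structures.
From mathcomp Require Import all_boot all_order all_algebra.
From mathcomp Require Import all_classical all_reals all_analysis.
From Stdlib Require List Cantor.
From mathcomp Require Import zify.

Set Implicit Arguments. Unset Strict Implicit. Unset Printing Implicit Defensive.
Import Order.TTheory GRing.Theory Num.Theory.
Import numFieldNormedType.Exports.
Local Open Scope classical_set_scope.

Notation cto := Cantor.to_nat.
Notation cof := Cantor.of_nat.

Lemma cto_mono i j j' : (j' < j)%N -> (cto (i, j') < cto (i, j))%N.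
Proof.
move=> h.
have e1 := Cantor.to_nat_spec i j. have e2 := Cantor.to_nat_spec i j'.
nia.
Qed.

Lemma cto_ge i j : (j <= cto (i, j))%N.
Proof. have := Cantor.to_nat_non_decreasing i j. lia. Qed.

Section Core.
Variable X : topologicalType.

Definition incl (F : seq X) (V : set X) := forall x, List.In x F -> V x.

Definition legal (psi : seq (set X) -> seq X) (W : nat -> set X) :=
  forall n, open (W n) /\ incl (psi (mkseq W n)) (W n).

Definition Merge (psi : nat -> seq (set X) -> seq (set X) -> seq X)
  (h : seq (set X)) : seq X :=
  let ij := cof (size h) in
  psi ij.1 h [seq nth setT h (cto (ij.1, j')) | j' <- iota 0 ij.2].

Lemma merge_legal psi W : legal (Merge psi) W -> forall i j,
  open (W (cto (i, j))) /\
  incl (psi i (mkseq W (cto (i, j))) (mkseq (fun j' => W (cto (i, j'))) j))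
    (W (cto (i, j))).
Proof.
move=> hl i j; have [oW inc] := hl (cto (i, j)); split => //.
move: inc; rewrite /Merge size_mkseq Cantor.cancel_of_to /=.
suff -> : [seq nth setT (mkseq W (cto (i, j))) (cto (i, j')) | j' <- iota 0 j]
   = mkseq (fun j' => W (cto (i, j'))) j by [].
rewrite /mkseq; apply/eq_in_map => j'.
rewrite mem_iota add0n => /= hj; rewrite nth_mkseq //; exact: cto_mono.
Qed.

Lemma incl_cat F1 F2 V : incl (F1 ++ F2) V -> incl F1 V /\ incl F2 V.
Proof. by move=> h; split => x hx; apply: h; apply List.in_or_app; tauto. Qed.

Definition Good (psi : seq (set X) -> seq X) (k : nat) :=
  forall W, legal psi W -> forall G : seq X, (size G <= k)%N ->
    exists n, incl G (W n).

Variable sigma : seq (set (set X)) -> set X.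
Hypothesis Hs : forall As : nat -> set (set X), (forall n, open_covers X (As n)) ->
      (forall n, As n (sigma (mkseq As n.+1))) /\
      open_covers X (range (fun n => sigma (mkseq As n.+1))).

Definition allc (s : seq (set (set X))) :=
  forall i, (i < size s)%N -> open_covers X (nth set0 s i).

Lemma sigma_in s U : allc s -> open_covers X U -> U (sigma (rcons s U)).
Proof.
move=> hs hU.
pose As n := nth U (rcons s U) n.
have hA : forall n, open_covers X (As n).
  move=> n; rewrite /As nth_rcons; case: ltnP => h1.
    by rewrite (set_nth_default set0) //; apply: hs.
  by case: eqP => // _.
have := (Hs hA).1 (size s).
suff -> : mkseq As (size s).+1 = rcons s U by rewrite /As nth_rcons ltnn eqxx.
apply: (@eq_from_nth _ U); first by rewrite size_mkseq size_rcons.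
by move=> i; rewrite size_mkseq => hi; rewrite nth_mkseq.
Qed.

Definition Pt (s : seq (set (set X))) (x : X) :=
  forall V, open V -> V x -> exists U, open_covers X U /\ sigma (rcons s U) = V.

Lemma Pt_ex s : allc s -> exists x, Pt s x.
Proof.
move=> hs; apply: contrapT => hn.
pose Us := [set V : set X | open V /\ exists x, V x /\
   ~ (exists U, open_covers X U /\ sigma (rcons s U) = V)].
have hU : open_covers X Us.
  split; first by move=> u [].
  apply/seteqP; split => // x _.
  have : ~ Pt s x by move=> hp; apply: hn; exists x.
  move=> /existsNP [V] /not_implyP [oV] /not_implyP [Vx] hV.
  by exists V => //; split => //; exists x.
have [_ [x [_ hx]]] := sigma_in hs hU.
by apply: hx; exists Us.
Qed.

Definition Ucho (s : seq (set (set X))) (V : set X) : set (set X) :=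
  match pselect (exists U, open_covers X U /\ sigma (rcons s U) = V) with
  | left e => projT1 (cid e)
  | right _ => setT end.

Lemma UchoP s V : (exists U, open_covers X U /\ sigma (rcons s U) = V) ->
  open_covers X (Ucho s V) /\ sigma (rcons s (Ucho s V)) = V.
Proof.
by move=> e; rewrite /Ucho; case: pselect => // e'; exact: (projT2 (cid e')).
Qed.

Definition xsel (s : seq (set (set X))) : seq X :=
  match pselect (exists x, Pt s x) with
  | left e => [:: projT1 (cid e)]
  | right _ => [::] end.

Lemma xselP s V : allc s -> open V -> incl (xsel s) V ->
  exists U, open_covers X U /\ sigma (rcons s U) = V.
Proof.
move=> hs oV; rewrite /xsel; case: pselect => [e|]; last first.
  by move=> h; exfalso; apply: h; exact: Pt_ex.
move=> hi; apply: (projT2 (cid e)) => //; apply: hi; by left.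
Qed.

Definition Bn (p : seq nat) := (sumn p).+1.

Definition Sh (h : seq (set X)) (p : seq nat) :=
  foldl (fun s m => rcons s (Ucho s (nth setT h m))) [::] p.
Definition SW (W : nat -> set X) (p : seq nat) :=
  foldl (fun s m => rcons s (Ucho s (W m))) [::] p.

Definition Tree (psi : seq (set X) -> seq X) : seq (set X) -> seq X :=
  Merge (fun i h th => match @unpickle (seq nat) i with
    | Some p => if (Bn p <= size th)%N then xsel (Sh h p) ++ psi (drop (Bn p) th)
                else [::]
    | None => [::] end).

Lemma sumn_in (p : seq nat) m : m \in p -> (m <= sumn p)%N.
Proof.
elim: p => //= a p ih; rewrite in_cons => /orP [/eqP ->|/ih]; lia.
Qed.

Lemma Sh_SW (W : nat -> set X) n p : (Bn p <= n)%N -> Sh (mkseq W n) p = SW W p.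
Proof.
move=> hB; rewrite /Sh /SW.
have : forall m, m \in p -> (m < n)%N.
  move=> m /sumn_in; rewrite /Bn in hB; lia.
elim/last_ind: p {hB} => // p m ih hm.
rewrite !foldl_rcons ih; last by move=> m' h'; apply: hm; rewrite mem_rcons in_cons h' orbT.
rewrite nth_mkseq //; apply: hm; by rewrite mem_rcons in_cons eqxx.
Qed.

Lemma Good_Tree psi k : Good psi k -> Good (Tree psi) k.+1.
Proof.
move=> hg W hl [|a G'] /= hG; first by exists 0%N => x [].
have hml := merge_legal hl.
pose V p c := W (cto (pickle p, c + Bn p)).
have hV : forall p, legal psi (V p).
  move=> p c; have [oW inc] := hml (pickle p) (c + Bn p); split => //.
  move: inc; rewrite pickleK size_mkseq leq_addl => /incl_cat [_].
  congr (incl (psi _) _); apply: (@eq_from_nth _ setT).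
    by rewrite size_drop !size_mkseq addnK.
  move=> i; rewrite size_drop size_mkseq addnK => hi.
  rewrite nth_drop nth_mkseq; last by rewrite addnC ltn_add2r.
  by rewrite nth_mkseq // /V addnC.
have hc : forall p, exists c, incl G' (V p c) by move=> p; apply: hg => //.
pose cf p := projT1 (cid (hc p)).
have cfP p : incl G' (V p (cf p)) := projT2 (cid (hc p)).
pose nx p := cto (pickle p, cf p + Bn p).
pose P := fix P t := if t is t'.+1 then rcons (P t') (nx (P t')) else [::].
pose U t := Ucho (SW W (P t)) (W (nx (P t))).
have hSP : forall t, SW W (P t) = mkseq U t.
  elim=> [//|t ih]; have -> : P t.+1 = rcons (P t) (nx (P t)) by [].
  by rewrite /SW foldl_rcons -/(SW W (P t)) mkseqS -ih.
have key : forall t, allc (mkseq U t) ->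
    open_covers X (U t) /\ sigma (rcons (mkseq U t) (U t)) = W (nx (P t)).
  move=> t hs; rewrite /U hSP; apply: UchoP; apply: xselP => //.
    exact: (hml (pickle (P t)) (cf (P t) + Bn (P t))).1.
  have [_ inc] := hml (pickle (P t)) (cf (P t) + Bn (P t)).
  move: inc; rewrite pickleK size_mkseq leq_addl => /incl_cat [+ _].
  rewrite Sh_SW ?hSP //; apply: leq_trans (cto_ge _ _); exact: leq_addl.
have hall : forall t, allc (mkseq U t).
  elim=> [|t ih] i; rewrite size_mkseq // => hi.
  rewrite nth_mkseq //; move: hi; rewrite ltnS leq_eqVlt => /orP [/eqP ->|hlt].
    exact: (key t ih).1.
  by have := ih i; rewrite size_mkseq nth_mkseq //; apply.
have [_ [_ hcov]] := Hs (fun t => (key t (hall t)).1).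
have : (\bigcup_(u in range (fun n => sigma (mkseq U n.+1))) u) a by rewrite hcov.
move=> [_ [t _ <-]]; rewrite mkseqS (key t (hall t)).2 => ha.
exists (nx (P t)) => x [<-|hx] //; exact: cfP.
Qed.

Lemma Good0 psi : Good psi 0.
Proof. by move=> W _ [|//] _; exists 0%N => x []. Qed.

Fixpoint phi (k : nat) : seq (set X) -> seq X :=
  if k is k'.+1 then Tree (phi k') else fun _ => [::].

Lemma phi_good k : Good (phi k) k.
Proof. elim: k => [|k ih]; [exact: Good0 | exact: Good_Tree]. Qed.

Definition Phi := Merge (fun k _ th => phi k th).
Definition Psi := Merge (fun m _ th => Phi th).

Lemma Psi_good W : legal Psi W -> forall m G, exists j, incl G (W (cto (m, j))).
Proof.
move=> hl m G.
have h1 : legal Phi (fun j => W (cto (m, j))).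
  by move=> j; have := merge_legal hl m j.
have h2 : legal (phi (size G)) (fun j => W (cto (m, cto (size G, j)))).
  by move=> j; have := merge_legal h1 (size G) j.
have [j hj] := phi_good h2 (leqnn _).
by exists (cto (size G, j)).
Qed.

End Core.

Local Open Scope ring_scope.

Section Top.
Variables (R : realType) (X : topologicalType).
Local Notation Z := (Cp R X).

Lemma sval_cont : continuous (fun h : Z => (sval h : {ptws X -> R})).
Proof. exact: initial_continuous. Qed.

Lemma ev_cont (x : X) : continuous (fun h : Z => sval h x).
Proof.
move=> h.
have h2 : {for (sval h : {ptws X -> R}), continuous (fun f : {ptws X -> R} => f x)}.
  exact: (@proj_continuous X (fun _ => R) x).
have := continuous_comp (@sval_cont h) h2.
by [].
Qed.


Definition pbasic (f : X -> R) (F : seq X) (e : R) : set (X -> R) :=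
  [set k | forall x, List.In x F -> `|k x - f x| < e].

Definition basic (g : Z) (F : seq X) (e : R) : set Z :=
  [set h | pbasic (sval g) F e (sval h)].

Lemma basic_nbhs g F e : 0 < e -> nbhs g (basic g F e).
Proof.
move=> e0; elim: F => [|x F ih].
  apply: (filterS _ (@filterT _ (@nbhs _ Z g) (nbhs_filter g))); by move=> h _ x [].
have h1 : \forall h \near g, `|sval g x - sval h x| < e.
  exact: (@cvgr_dist_lt _ _ _ _ (nbhs_filter g) _ _ (@ev_cont x g) e e0).
apply: filterS (filterI h1 ih) => h [hx hF] y [<-|hy].
  by rewrite distrC.
exact: hF.
Qed.

Lemma ptws_basic (f : {ptws X -> R}) (O : set {ptws X -> R}) :
  nbhs f O -> exists F e, 0 < e /\ pbasic f F e `<=` O.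
Proof.
pose D := [set i : seq X * R | 0 < i.2].
pose Fb := filter_from D (fun i => pbasic f i.1 i.2 : set {ptws X -> R}).
have FF : Filter Fb.
  apply: filter_from_filter; first by exists ([::], 1); rewrite /D /=.
  move=> [F1 e1] [F2 e2]; rewrite /D /= => h1 h2.
  exists (F1 ++ F2, Num.min e1 e2); first by rewrite /= lt_min h1 h2.
  move=> k /= hk; split => x hx; apply: (lt_le_trans (hk x _)).
  - by apply List.in_or_app; left.
  - by rewrite ge_min lexx.
  - by apply List.in_or_app; right.
  - by rewrite ge_min lexx orbT.
have hc : {ptws, Fb --> f}.
  apply/(pointwise_cvgP _ FF) => t N /nbhs_ballP [e /= e0 hN].
  exists ([:: t], e) => //= k hk; apply: hN.
  by rewrite -ball_normE /ball_ /= distrC; apply: hk; left.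
move=> /hc [[F e] /= e0 hs]; by exists F, e.
Qed.

Lemma basic_sub (g : Z) (B : set Z) :
  nbhs g B -> exists F e, 0 < e /\ basic g F e `<=` B.
Proof.
rewrite nbhsE => -[Q [oQ Qg] sub].
case: oQ => Op oOp eO.
have : nbhs (sval g : {ptws X -> R}) Op.
  apply: open_nbhs_nbhs; split => //; by rewrite -eO in Qg.
move=> /ptws_basic [F [e [e0 hF]]]; exists F, e; split => // h hh.
apply: sub; rewrite -eO; exact: hF.
Qed.

End Top.


Section Main.
Variables (R : realType) (X : topologicalType).
Local Notation Z := (Cp R X).
Variable sigma : seq (set (set X)) -> set X.
Hypothesis Hs : forall As : nat -> set (set X), (forall n, open_covers X (As n)) ->
      (forall n, As n (sigma (mkseq As n.+1))) /\
      open_covers X (range (fun n => sigma (mkseq As n.+1))).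

Local Notation Ps := (Psi sigma).

Definition eps (n : nat) : R := ((Cantor.of_nat n).1.+1%:R)^-1.

Lemma eps_gt0 n : 0 < eps n.
Proof. by rewrite /eps invr_gt0 ltr0n. Qed.

Lemma eps_small (e : R) : 0 < e -> exists m, forall j, eps (Cantor.to_nat (m, j)) <= e.
Proof.
move=> e0; exists (Num.truncn e^-1) => j; rewrite /eps Cantor.cancel_of_to /=.
rewrite -[leRHS]invrK lef_pV2 ?posrE ?invr_gt0 ?ltr0n //.
exact: ltW (truncnS_gt _).
Qed.

Lemma open_lt (f : X -> R) (e : R) : continuous f -> open [set x | `|f x| < e].
Proof.
move=> /continuousP hf.
have -> : [set x | `|f x| < e] = f @^-1` ball 0 e.
  by apply/seteqP; split => x /=; rewrite -ball_normE /ball_ /= sub0r normrN.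
exact: hf (ball_open _ _).
Qed.

Definition Wg (g : Z) (n : nat) (f : Z) : set X :=
  [set x | `|sval f x - sval g x| < eps n].

Lemma Wg_open g n f : open (Wg g n f).
Proof.
apply: (@open_lt (fun x => sval f x - sval g x)) => x; apply: continuousB.
  by have := set_mem (svalP f); apply.
by have := set_mem (svalP g); apply.
Qed.

Definition choose (g : Z) (A : set Z) (F : seq X) (e : R) : Z :=
  match pselect (exists f, A f /\ basic g F e f) with
  | left p => projT1 (cid p) | right _ => g end.

Lemma chooseP g A F e : closure A g -> 0 < e ->
  A (choose g A F e) /\ basic g F e (choose g A F e).
Proof.
move=> hc e0; rewrite /choose; case: pselect => [p|hn].
  exact: (projT2 (cid p)).
exfalso; apply: hn; have [f [Af bf]] := hc _ (basic_nbhs g F e0).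
by exists f.
Qed.

Local Notation o := (Cp_zero R X).

Definition Ws (g : Z) (prev : seq Z) : seq (set X) :=
  mkseq (fun i => Wg g i (nth g prev i)) (size prev).

Fixpoint go (prev : seq Z) (As : seq (set Z)) : seq Z :=
  match As with
  | [::] => prev
  | A :: As' => go (rcons prev (choose o A (Ps (Ws o prev)) (eps (size prev)))) As'
  end.

Definition tau (As : seq (set Z)) : Z := last o (go [::] As).

Lemma go_rcons prev As A : go prev (rcons As A) =
  rcons (go prev As) (choose o A (Ps (Ws o (go prev As))) (eps (size (go prev As)))).
Proof. by elim: As prev => [|B As ih] prev //=. Qed.

Lemma size_go prev As : size (go prev As) = (size prev + size As)%N.
Proof. by elim: As prev => [|B As ih] prev /=; rewrite ?addn0 // ih size_rcons addnS. Qed.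

Lemma Ws_mkseq g (c : nat -> Z) n : Ws g (mkseq c n) = mkseq (fun i => Wg g i (c i)) n.
Proof.
rewrite /Ws size_mkseq; apply: (@eq_from_nth _ setT); rewrite !size_mkseq //.
by move=> i hi; rewrite !nth_mkseq.
Qed.

Lemma part1 : II_has_winning_strategy (Omega_o R X) (Omega_o R X).
Proof.
exists tau => As hA.
pose c n := tau (mkseq As n.+1).
have hL : forall n, go [::] (mkseq As n) = mkseq c n.
  elim=> [//|n ih]; rewrite mkseqS go_rcons ih mkseqS; congr rcons.
  by rewrite /c /tau mkseqS go_rcons ih last_rcons size_mkseq.
have hc : forall n, c n = choose o (As n) (Ps (mkseq (fun i => Wg o i (c i)) n)) (eps n).
  by move=> n; rewrite /c /tau mkseqS go_rcons hL last_rcons size_mkseq Ws_mkseq.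
have hcP : forall n, As n (c n) /\ basic o (Ps (mkseq (fun i => Wg o i (c i)) n)) (eps n) (c n).
  move=> n; rewrite hc; apply: chooseP; [exact: (hA n).2 | exact: eps_gt0].
split; first by move=> n; exact: (hcP n).1.
split.
  by move=> [n _ hn]; apply: (hA n).1; rewrite -hn; exact: (hcP n).1.
move=> B /basic_sub [F [e [e0 hFB]]].
have [m hm] := eps_small e0.
have hleg : legal Ps (fun i => Wg o i (c i)).
  move=> n; split; first exact: Wg_open.
  by move=> x hx; apply: (hcP n).2.
have [j hj] := Psi_good Hs hleg m F.
exists (c (Cantor.to_nat (m, j))); split; first by exists (Cantor.to_nat (m, j)).
apply: hFB => x hx; apply: lt_le_trans (hj x hx) (hm j).
Qed.

Section Part2.
Variables (Y : topologicalType) (hY : countably_tight Y).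
Variables (A : set (Z * Y)%type) (g : Z) (y : Y).
Hypothesis hA : closure A ((g, y) : (Z * Y)%type).

Let b0 : (Z * Y)%type := (g, y).
Let Wb (i : nat) (b : (Z * Y)%type) := Wg g i b.1.

Let D (p : seq (Z * Y)%type) : set (Z * Y)%type :=
  [set b | A b /\ basic g (Ps (mkseq (fun i => Wb i (nth b0 p i)) (size p)))
                            (eps (size p)) b.1].

Let D_cl p : closure (snd @` D p) y.
Proof.
move=> O hO.
have hN : nbhs ((g, y) : (Z * Y)%type)
   (basic g (Ps (mkseq (fun i => Wb i (nth b0 p i)) (size p))) (eps (size p)) `*` O).
  exists (basic g (Ps (mkseq (fun i => Wb i (nth b0 p i)) (size p))) (eps (size p)), O) => //.
  by split => //; apply: basic_nbhs; exact: eps_gt0.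
have [b [Ab [b1 b2]]] := hA hN.
by exists b.2; split => //; exists b.
Qed.

Let Cch p : set Y := projT1 (cid (hY (D_cl p))).
Let CchP p : [/\ Cch p `<=` snd @` D p, countable (Cch p) & closure (Cch p) y].
Proof. exact: (projT2 (cid (hY (D_cl p)))). Qed.

Let pre p (w : Y) : (Z * Y)%type :=
  match pselect (exists b, D p b /\ b.2 = w) with
  | left q => projT1 (cid q) | right _ => b0 end.

Let E p := pre p @` Cch p.

Let preP p w : Cch p w -> D p (pre p w) /\ (pre p w).2 = w.
Proof.
move=> hw; rewrite /pre; case: pselect => [q|hn]; first exact: (projT2 (cid q)).
exfalso; apply: hn; have [hs _ _] := CchP p; have [b Db <-] := hs _ hw.
by exists b.
Qed.

Let E_sub p : E p `<=` D p.
Proof. by move=> b [w hw <-]; exact: (preP hw).1. Qed.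

Let E_cnt p : countable (E p).
Proof. have [_ hc _] := CchP p; exact: card_le_trans (card_image_le _ _) hc. Qed.

Let E_near p O : nbhs y O -> exists b, E p b /\ O b.2.
Proof.
move=> hO; have [_ _ hc] := CchP p; have [w [hw Ow]] := hc _ hO.
exists (pre p w); split; first by exists w.
by rewrite (preP hw).2.
Qed.

Fixpoint Lvl (n : nat) : set (seq (Z * Y)%type) :=
  if n is n'.+1 then \bigcup_(p in Lvl n') (rcons p @` E p) else [set [::]].

Lemma Lvl_cnt n : countable (Lvl n).
Proof.
elim: n => [|n ih] /=; first exact: countable1.
apply: bigcup_countable => // p _.
exact: card_le_trans (card_image_le _ _) (E_cnt p).
Qed.

Definition Bset := \bigcup_(n in [set: nat]) \bigcup_(p in Lvl n) E p.

Lemma Bset_cnt : countable Bset.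
Proof.
apply: bigcup_countable; first exact: countableP.
move=> n _; apply: bigcup_countable; first exact: Lvl_cnt.
move=> p _; exact: E_cnt.
Qed.

Lemma Bset_sub : Bset `<=` A.
Proof. by move=> b [n _ [p _ /E_sub []]]. Qed.

Lemma Bset_cl : closure Bset ((g, y) : (Z * Y)%type).
Proof.
move=> N [[N1 N2]] /= [hN1 hN2] hsub.
have [F [e [e0 hFe]]] := basic_sub hN1.
have [m hm] := eps_small e0.
have hex p : exists b, E p b /\ N2 b.2 by exact: E_near.
pose bch p := projT1 (cid (hex p)).
have bchP p : E p (bch p) /\ N2 (bch p).2 := projT2 (cid (hex p)).
pose P := fix P t := if t is t'.+1 then rcons (P t') (bch (P t')) else [::].
pose bb t := bch (P t).
have hP : forall t, P t = mkseq bb t.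
  elim=> [//|t ih]; have -> : P t.+1 = rcons (P t) (bch (P t)) by [].
  by rewrite mkseqS -ih.
have hPL : forall t, Lvl t (P t).
  elim=> [//|t ih] /=; exists (P t) => //; exists (bch (P t)) => //; exact: (bchP _).1.
have hleg : legal Ps (fun t => Wb t (bb t)).
  move=> t; split; first exact: Wg_open.
  have [_ hb] := E_sub (bchP (P t)).1.
  move: hb; rewrite hP size_mkseq.
  have -> : mkseq (fun i => Wb i (nth b0 (mkseq bb t) i)) t = mkseq (fun i => Wb i (bb i)) t.
    apply: (@eq_from_nth _ setT); rewrite !size_mkseq // => i hi.
    by rewrite !nth_mkseq.
  by move=> hb x hx; have := hb x hx; rewrite -hP.
have [j hj] := Psi_good Hs hleg m F.
set n := Cantor.to_nat (m, j) in hj.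
exists (bb n); split.
  by exists n => //; exists (P n) => //; exact: (bchP _).1.
apply: hsub; split => /=; last exact: (bchP _).2.
apply: hFe => x hx; apply: lt_le_trans (hj x hx) (hm j).
Qed.

End Part2.

Lemma part2 : productively_countably_tight Z.
Proof.
move=> Y hY A [g y] hA.
exists (Bset hY hA); split; [exact: Bset_sub | exact: Bset_cnt | exact: Bset_cl].
Qed.

End Main.


Theorem proposition3p4 (R : realType) (X : topologicalType) :
  tychonoff_space X ->
  II_has_winning_strategy (open_covers X) (open_covers X) ->
  II_has_winning_strategy (Omega_o R X) (Omega_o R X) /\
  productively_countably_tight (Cp R X).
Proof.
move=> _ [sigma Hs]; split; [exact: (@part1 R X sigma Hs) | exact: (@part2 R X sigma Hs)].
Qed.
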